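(* Let $L$ be a finite extension of $\mathbb{Z}_\mathrm{max}$. Then $L\cong F^{(n)}$ as extensions of $\mathbb{Z}_\mathrm{max}$ for some positive integer $n$.
   Context: A (commutative) semiring is a set with two binary operations, addition and multiplication, each making it a commutative monoid (with identities $0$ and $1$), such that multiplication distributes over addition. A semifield is a semiring in which every nonzero element is a multiplicative unit. $\mathbb{Z}_\mathrm{max}=\mathbb{Z}\cup\{-\infty\}$ is the semifield whose addition is $\max$ and whose multiplication is ordinary addition of integers (so its zero is $-\infty$ and its one is the integer $0$). Writing $u$ for the integer $1$ viewed in $\mathbb{Z}_\mathrm{max}$, we have $\mathbb{Z}_\mathrm{max}=\{0\}\cup\{u^k: k\in\mathbb{Z}\}$ with $u^a+u^b=u^{\max(a,b)}$. An extension of a semifield $K$ is a semifield $L$ together with an injective semiring homomorphism $K\to L$; it is finite if this homomorphism makes $L$ a finitely generated $K$-semimodule. For a positive integer $n$, $F^{(n)}$ denotes the extension of $\mathbb{Z}_\mathrm{max}$ given by $L=\mathbb{Z}_\mathrm{max}$ and the injective homomorphism $\mathbb{Z}_\mathrm{max}\to\mathbb{Z}_\mathrm{max}$, $u^k\mapsto u^{nk}$, $0\mapsto 0$. An isomorphism of extensions of $K$ is a semiring isomorphism compatible with the embeddings of $K$. *)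

(* Defs.v *)
From HB Require Import structures.
From mathcomp Require Import all_boot all_order all_algebra.
Set Implicit Arguments. Unset Strict Implicit. Unset Printing Implicit Defensive.
Import Order.TTheory GRing.Theory Num.Theory.
Local Open Scope ring_scope.

(* The semifield Z_max = Z ∪ {-oo}: zmax_ninf is -oo (the zero),
   zmax_fin k is u^k (so zmax_fin 0 is the one). *)
Inductive zmax := zmax_ninf | zmax_fin of int.

Definition zmax_to (x : zmax) : option int :=
  if x is zmax_fin k then Some k else None.
Definition zmax_of (o : option int) : zmax :=
  if o is Some k then zmax_fin k else zmax_ninf.
Lemma zmax_toK : cancel zmax_to zmax_of. Proof. by case. Qed.
HB.instance Definition _ := Countable.copy zmax (can_type zmax_toK).

Definition zmax_add (x y : zmax) : zmax :=
  match x, y with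
  | zmax_ninf, _ => y
  | _, zmax_ninf => x
  | zmax_fin a, zmax_fin b => zmax_fin (Num.max a b)
  end.
Definition zmax_mul (x y : zmax) : zmax :=
  match x, y with
  | zmax_fin a, zmax_fin b => zmax_fin (a + b)
  | _, _ => zmax_ninf
  end.

Lemma zmax_addA : associative zmax_add.
Proof. by case=> [|a] [|b] [|c] //=; rewrite maxA. Qed.
Lemma zmax_addC : commutative zmax_add.
Proof. by case=> [|a] [|b] //=; rewrite maxC. Qed.
Lemma zmax_add0 : left_id zmax_ninf zmax_add.
Proof. by case. Qed.

HB.instance Definition _ := GRing.isNmodule.Build zmax zmax_addA zmax_addC zmax_add0.

Lemma zmax_mulA : associative zmax_mul.
Proof. by case=> [|a] [|b] [|c] //=; rewrite addrA. Qed.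
Lemma zmax_mulC : commutative zmax_mul.
Proof. by case=> [|a] [|b] //=; rewrite addrC. Qed.
Lemma zmax_mul1 : left_id (zmax_fin 0) zmax_mul.
Proof. by case=> [|a] //=; rewrite add0r. Qed.
Lemma zmax_mulDl : left_distributive zmax_mul (@GRing.add zmax).
Proof.
case=> [|a] [|b] [|c] //=; congr zmax_fin.
by rewrite real_addr_maxl ?num_real.
Qed.
Lemma zmax_mul0 : left_zero zmax_ninf zmax_mul.
Proof. by []. Qed.
Lemma zmax_one_neq0 : zmax_fin 0 != zmax_ninf.
Proof. by []. Qed.

HB.instance Definition _ := GRing.Nmodule_isComNzSemiRing.Build zmax
  zmax_mulA zmax_mulC zmax_mul1 zmax_mulDl zmax_mul0 zmax_one_neq0.

Definition zmax_u : zmax := zmax_fin 1.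

(* The embedding Z_max -> Z_max of F^(n): u^k |-> u^(n k), 0 |-> 0. *)
Definition frob_zmax (n : nat) (x : zmax) : zmax :=
  if x is zmax_fin k then zmax_fin (n%:Z * k) else zmax_ninf.

Definition is_semifield (L : comNzSemiRingType) : Prop :=
  forall x : L, x <> 0 -> exists y : L, x * y = 1.

Definition fin_gen_semimodule (K L : comNzSemiRingType) (f : K -> L) : Prop :=
  exists s : seq L, forall x : L,
    exists c : 'I_(size s) -> K, x = \sum_(i < size s) f (c i) * s`_i.

(* Main.v *)
Require Import Defs.
From HB Require Import structures.
From mathcomp Require Import all_boot all_order all_algebra.
From Stdlib Require Import IndefiniteDescription.
Import Order.TTheory GRing.Theory Num.Theory.
Local Open Scope ring_scope.
Set Implicit Arguments.
Unset Strict Implicit.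

Definition lq (L : comNzSemiRingType) (x y : L) : bool := x + y == y.
Definition idemp (L : comNzSemiRingType) := forall x : L, x + x = x.

Lemma lqP (L : comNzSemiRingType) (x y : L) : reflect (x + y = y) (lq x y).
Proof. exact: eqP. Qed.

Lemma lq_refl (L : comNzSemiRingType) (Hi : idemp L) (x : L) : lq x x.
Proof. by apply/lqP. Qed.

Lemma lq_trans (L : comNzSemiRingType) (x y z : L) : lq x y -> lq y z -> lq x z.
Proof. by move=> /lqP H1 /lqP H2; apply/lqP; rewrite -H2 addrA H1. Qed.

Lemma lq_anti (L : comNzSemiRingType) (x y : L) : lq x y -> lq y x -> x = y.
Proof. by move=> /lqP H1 /lqP H2; rewrite -H2 addrC H1. Qed.

Lemma lq_addl (L : comNzSemiRingType) (Hi : idemp L) (x y : L) : lq x (x + y).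
Proof. by apply/lqP; rewrite addrA Hi. Qed.

Lemma lq_addr (L : comNzSemiRingType) (Hi : idemp L) (x y : L) : lq y (x + y).
Proof. by rewrite addrC lq_addl. Qed.

Lemma lq_add (L : comNzSemiRingType) (a b c d : L) : lq a b -> lq c d -> lq (a + c) (b + d).
Proof.
move=> /lqP H1 /lqP H2; apply/lqP.
by rewrite -[in RHS]H1 -[in RHS]H2 addrA addrA; congr (_ + _); rewrite -!addrA [c + b]addrC.
Qed.

Lemma lq_join (L : comNzSemiRingType) (a b c : L) : lq a c -> lq b c -> lq (a + b) c.
Proof. by move=> /lqP H1 /lqP H2; apply/lqP; rewrite -addrA H2 H1. Qed.

Lemma lq_mul (L : comNzSemiRingType) (x y z : L) : lq x y -> lq (z * x) (z * y).
Proof. by move=> /lqP H; apply/lqP; rewrite -mulrDr H. Qed.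

Lemma lq0 (L : comNzSemiRingType) (x : L) : lq 0 x.
Proof. by apply/lqP; rewrite add0r. Qed.

Lemma lq_x0 (L : comNzSemiRingType) (x : L) : lq x 0 -> x = 0.
Proof. by move=> /lqP; rewrite addr0. Qed.

Lemma lq_sum (L : comNzSemiRingType) (I : Type) (r : seq I) (F G : I -> L) :
  (forall i, lq (F i) (G i)) -> lq (\sum_(i <- r) F i) (\sum_(i <- r) G i).
Proof.
move=> H; elim: r => [|i r IH]; first by rewrite !big_nil lq0.
by rewrite !big_cons lq_add.
Qed.

Lemma lq_mul2 (L : comNzSemiRingType) (a b c d : L) : lq a b -> lq c d -> lq (a * c) (b * d).
Proof. move=> H1 H2; apply: (lq_trans (y := b * c)); first by rewrite mulrC [b * _]mulrC; apply: lq_mul. exact: lq_mul. Qed.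

Lemma sf_cancel (L : comNzSemiRingType) (Hsf : is_semifield L) (x y z : L) :
  z <> 0 -> x * z = y * z -> x = y.
Proof.
move=> nz H; have [w Hw] := Hsf z nz.
by rewrite -[x]mulr1 -[y]mulr1 -Hw !mulrA H.
Qed.

Lemma lq_cancel (L : comNzSemiRingType) (Hsf : is_semifield L) (x y z : L) :
  z <> 0 -> lq (x * z) (y * z) -> lq x y.
Proof. move=> nz /lqP H; apply/lqP; apply: (sf_cancel Hsf nz); by rewrite mulrDl. Qed.

Lemma sf_mul_neq0 (L : comNzSemiRingType) (Hsf : is_semifield L) (x y : L) :
  x <> 0 -> y <> 0 -> x * y <> 0.
Proof.
move=> nx ny H; have [w Hw] := Hsf x nx; have [v Hv] := Hsf y ny.
have : x * y * (w * v) = 1 by rewrite mulrACA Hw Hv mulr1.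
by rewrite H mul0r => /esym/eqP; rewrite oner_eq0.
Qed.

Lemma sf_exp_neq0 (L : comNzSemiRingType) (Hsf : is_semifield L) (x : L) n :
  x <> 0 -> x ^+ n <> 0.
Proof.
move=> nx; elim: n => [|n IH]; first by rewrite expr0; apply/eqP; rewrite oner_eq0.
by rewrite exprS; apply: sf_mul_neq0.
Qed.

Lemma inv_neq0 (L : comNzSemiRingType) (x y : L) : x * y = 1 -> y <> 0.
Proof. by move=> H Hy; move: H; rewrite Hy mulr0 => /esym/eqP; rewrite oner_eq0. Qed.

Lemma one_neq0 (L : comNzSemiRingType) : (1 : L) <> 0.
Proof. by apply/eqP; rewrite oner_eq0. Qed.

Definition E (L : comNzSemiRingType) (f : {rmorphism zmax -> L}) (k : int) : L :=
  f (zmax_fin k).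

Lemma EM (L : comNzSemiRingType) (f : {rmorphism zmax -> L}) j k :
  E f j * E f k = E f (j + k).
Proof. by rewrite /E -rmorphM. Qed.

Lemma ED (L : comNzSemiRingType) (f : {rmorphism zmax -> L}) j k :
  E f j + E f k = E f (Num.max j k).
Proof. by rewrite /E -raddfD. Qed.

Lemma E0 (L : comNzSemiRingType) (f : {rmorphism zmax -> L}) : E f 0 = 1.
Proof. by rewrite /E -(rmorph1 f). Qed.

Lemma f_ninf (L : comNzSemiRingType) (f : {rmorphism zmax -> L}) : f zmax_ninf = 0.
Proof. exact: (raddf0 f). Qed.

Lemma idemp_f (L : comNzSemiRingType) (f : {rmorphism zmax -> L}) : idemp L.
Proof.
move=> x; have H : (1 : L) + 1 = 1 by rewrite -(E0 f) ED maxxx.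
by rewrite -{1 2}[x]mulr1 -mulrDr H mulr1.
Qed.

Lemma E_inv (L : comNzSemiRingType) (f : {rmorphism zmax -> L}) j :
  E f j * E f (- j) = 1.
Proof. by rewrite EM subrr E0. Qed.

Lemma E_neq0 (L : comNzSemiRingType) (f : {rmorphism zmax -> L}) j : E f j <> 0.
Proof. apply: (@inv_neq0 L (E f (- j))); by rewrite mulrC E_inv. Qed.

Lemma lqE (L : comNzSemiRingType) (f : {rmorphism zmax -> L}) (Hinj : injective f) j k :
  lq (E f j) (E f k) = (j <= k).
Proof.
rewrite /lq ED; apply/eqP/idP.
  by move=> /Hinj [] <-; rewrite le_max lexx ?orbT.
by move=> H; rewrite (max_idPr H).
Qed.

Lemma lq1E (L : comNzSemiRingType) (f : {rmorphism zmax -> L}) (Hinj : injective f) j k :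
  (j <= k) -> lq (E f j) (E f k).
Proof. by rewrite lqE. Qed.

From mathcomp Require Import zify ring.

Definition zexp (c : zmax) : int := if c is zmax_fin k then k else 0.

Lemma f_le (L : comNzSemiRingType) (f : {rmorphism zmax -> L}) (Hinj : injective f)
  (c : zmax) (K : int) : zexp c <= K -> lq (f c) (E f K).
Proof.
case: c => [|k] /= H; first by rewrite f_ninf lq0.
by rewrite -/(E f k) lqE.
Qed.

Lemma bound_coef (L : comNzSemiRingType) (f : {rmorphism zmax -> L}) (Hinj : injective f)
  m (c : 'I_m -> zmax) : exists K : nat, forall i, lq (f (c i)) (E f K%:Z).
Proof.
pose F i := `|zexp (c i)|%N.
have HK : forall i, (F i <= \max_i F i)%N := fun i => @leq_bigmax _ F i.
move: HK; move: (\max_i F i) => K HK.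
exists K => i; apply: f_le => //.
apply: Order.POrderTheory.le_trans (lez_abs _) _; rewrite lez_nat; exact: HK.
Qed.

Lemma uniform m (P : 'I_m -> nat -> Prop) :
  (forall i a b, P i a -> (a <= b)%N -> P i b) ->
  (forall i, exists a, P i a) -> exists C, forall i, P i C.
Proof.
move=> mono H.
pose g i := proj1_sig (constructive_indefinite_description _ (H i)).
have HK : forall i, (g i <= \max_i g i)%N := fun i => @leq_bigmax _ g i.
move: HK; move: (\max_i g i) => K HK.
exists K => i; apply: (mono i (g i)) => //.
exact: (proj2_sig (constructive_indefinite_description _ (H i))).
Qed.

Definition FG (L : comNzSemiRingType) (f : {rmorphism zmax -> L}) (s : seq L) :=
  forall x : L, exists c : 'I_(size s) -> zmax, x = \sum_(i < size s) f (c i) * s`_i.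

Lemma ub (L : comNzSemiRingType) (f : {rmorphism zmax -> L}) (Hsf : is_semifield L)
  (Hinj : injective f) (s : seq L) (Hs : FG f s) (y : L) : exists K, lq y (E f K).
Proof.
set sg := \sum_(i < size s) s`_i.
have Hy : forall y, exists K : nat, lq y (E f K%:Z * sg).
  move=> x; have [c ->] := Hs x; have [K HK] := bound_coef Hinj c; exists K.
  rewrite /sg mulr_sumr; apply: lq_sum => i.
  by rewrite [f _ * _]mulrC [E f _ * _]mulrC; apply: lq_mul.
have sg0 : sg <> 0.
  move=> H; have [K HK] := Hy 1; move: HK; rewrite H mulr0 => /lq_x0; exact: one_neq0.
have [K' HK'] := Hy (sg * sg).
have Hsg : lq sg (E f K'%:Z) by apply: (lq_cancel Hsf sg0).
have [K HK] := Hy y; exists (K%:Z + K'%:Z); rewrite -EM.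
apply: lq_trans HK _; exact: lq_mul.
Qed.

Lemma lb (L : comNzSemiRingType) (f : {rmorphism zmax -> L}) (Hsf : is_semifield L)
  (Hinj : injective f) (s : seq L) (Hs : FG f s) (y : L) :
  y <> 0 -> exists K, lq (E f K) y.
Proof.
move=> y0; have [w Hw] := Hsf y y0; have [K HK] := ub Hsf Hinj Hs w.
exists (- K).
have H := lq_mul (y * E f (- K)) HK.
have e1 : y * E f (- K) * w = E f (- K) by rewrite mulrAC Hw mul1r.
have e2 : y * E f (- K) * E f K = y by rewrite -mulrA EM addNr E0 mulr1.
by move: H; rewrite e1 e2.
Qed.

Lemma gen_sand (L : comNzSemiRingType) (f : {rmorphism zmax -> L}) (Hsf : is_semifield L)
  (Hinj : injective f) (s : seq L) (Hs : FG f s) :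
  exists c : nat, forall i : 'I_(size s),
    s`_i = 0 \/ (lq (E f (- c%:Z)) s`_i /\ lq s`_i (E f c%:Z)).
Proof.
apply: uniform.
  move=> i a b [->|[H1 H2]] hab; [by left|right]; split.
    by apply: lq_trans H1; apply: (lq1E Hinj); rewrite lerN2 lez_nat.
  by apply: lq_trans H2 _; apply: (lq1E Hinj); rewrite lez_nat.
move=> i; case: (eqVneq s`_i 0) => [->|nz]; first by exists 0%N; left.
have [K HK] := ub Hsf Hinj Hs s`_i.
have nz' : s`_i <> 0 by apply/eqP.
have [j' Hj'] := lb Hsf Hinj Hs nz'.
exists (`|j'|%N + `|K|%N)%N; right; split.
  by apply: lq_trans Hj'; apply: (lq1E Hinj); lia.
by apply: lq_trans HK _; apply: (lq1E Hinj); lia.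
Qed.

Definition sand (L : comNzSemiRingType) (f : {rmorphism zmax -> L}) (c : nat) (k : int) (y : L) :=
  lq (E f (k - c%:Z)) y && lq y (E f (k + c%:Z)).

Lemma sand_add (L : comNzSemiRingType) (f : {rmorphism zmax -> L}) (Hinj : injective f)
  c k k' (x y : L) : sand f c k x -> sand f c k' y -> sand f c (Num.max k k') (x + y).
Proof.
have Hi := idemp_f f.
move=> /andP [a1 a2] /andP [b1 b2]; apply/andP; split.
  case: (lerP k k') => h.
    by apply: lq_trans b1 (lq_addr Hi _ _).
  by apply: lq_trans a1 (lq_addl Hi _ _).
apply: lq_trans (lq_add a2 b2) _; rewrite ED; apply: (lq1E Hinj).
rewrite ge_max; apply/andP; split; rewrite lerD2r ?le_max ?lexx ?orbT //.
Qed.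

Lemma width (L : comNzSemiRingType) (f : {rmorphism zmax -> L}) (Hsf : is_semifield L)
  (Hinj : injective f) (s : seq L) (Hs : FG f s) (c : nat)
  (Hc : forall i : 'I_(size s),
    s`_i = 0 \/ (lq (E f (- c%:Z)) s`_i /\ lq s`_i (E f c%:Z)))
  (y : L) : y <> 0 -> exists k, sand f c k y.
Proof.
move=> y0; have [cf Hy] := Hs y.
suff : forall r, \sum_(i <- r) f (cf i) * s`_i = 0 \/
                 exists k, sand f c k (\sum_(i <- r) f (cf i) * s`_i).
  by move=> /(_ (index_enum _)); rewrite -Hy; case.
elim => [|i r IH]; first by left; rewrite big_nil.
have Ht : f (cf i) * s`_i = 0 \/ exists k, sand f c k (f (cf i) * s`_i).
  case E1: (cf i) => [|k]; first by left; rewrite f_ninf mul0r.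
  case: (Hc i) => [->|[h1 h2]]; first by left; rewrite mulr0.
  right; exists k; apply/andP; split; rewrite -EM.
    exact: lq_mul.
  exact: lq_mul.
rewrite big_cons; case: Ht => [->|[k Hk]]; first by rewrite add0r.
case: IH => [->|[k' Hk']]; first by rewrite addr0; right; exists k.
by right; exists (Num.max k k'); apply: sand_add.
Qed.

Lemma term_mem (L : comNzSemiRingType) (f : {rmorphism zmax -> L}) (Hinj : injective f)
  (s : seq L) (c D : nat)
  (Hc : forall i : 'I_(size s),
    s`_i = 0 \/ (lq (E f (- c%:Z)) s`_i /\ lq s`_i (E f c%:Z)))
  (i : 'I_(size s)) (z : zmax) :
  lq (f z * s`_i) (E f D%:Z) ->
  1 + f z * s`_i \in 1 :: [seq 1 + E f (j%:Z - c%:Z) * s`_i | j <- iota 0 (D + c + c + 1)].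
Proof.
move=> hD; rewrite in_cons.
case: z hD => [|k] hD; first by rewrite f_ninf mul0r addr0 eqxx.
case: (Hc i) => [->|[h1 h2]]; first by rewrite mulr0 addr0 eqxx.
case: (lerP k (- c%:Z)) => hk.
  have : lq (f (zmax_fin k) * s`_i) 1.
    apply: lq_trans (lq_mul (f (zmax_fin k)) h2) _.
    by rewrite -/(E f k) EM -(E0 f); apply: (lq1E Hinj); lia.
  by move/lqP; rewrite addrC => ->; rewrite eqxx.
have hk2 : k - c%:Z <= D%:Z.
  rewrite -(lqE Hinj) -EM; apply: lq_trans hD; exact: lq_mul.
apply/orP; right; apply/mapP; exists (absz (k + c%:Z)).
  by rewrite mem_iota; lia.
rewrite /E; congr (1 + f (zmax_fin _) * _); lia.
Qed.

Lemma finite_interval (L : comNzSemiRingType) (f : {rmorphism zmax -> L})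
  (Hinj : injective f) (s : seq L) (Hs : FG f s) (c : nat)
  (Hc : forall i : 'I_(size s),
    s`_i = 0 \/ (lq (E f (- c%:Z)) s`_i /\ lq s`_i (E f c%:Z))) (D : nat) :
  exists C : seq L, forall y, lq 1 y -> lq y (E f D%:Z) -> y \in C.
Proof.
have Hi := idemp_f f.
suff H : forall r : seq 'I_(size s), exists C : seq L, forall cf : 'I_(size s) -> zmax,
    lq (\sum_(i <- r) f (cf i) * s`_i) (E f D%:Z) ->
    1 + \sum_(i <- r) f (cf i) * s`_i \in C.
  have [C HC] := H (index_enum _); exists C => y h1 h2.
  have [cf Hy] := Hs y; move: h1 h2; rewrite Hy => /lqP h1 h2.
  by rewrite -h1; apply: HC.
elim => [|i r [C HC]]; first by exists [:: 1] => cf _; rewrite big_nil addr0 mem_head.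
exists [seq x + z | x <- 1 :: [seq 1 + E f (j%:Z - c%:Z) * s`_i | j <- iota 0 (D + c + c + 1)],
                    z <- C] => cf; rewrite big_cons => hD.
have e : 1 + (f (cf i) * s`_i + \sum_(j <- r) f (cf j) * s`_j)
   = (1 + f (cf i) * s`_i) + (1 + \sum_(j <- r) f (cf j) * s`_j).
  by rewrite addrACA Hi addrA.
rewrite e; apply: allpairs_f.
  apply: (term_mem Hinj Hc); exact: lq_trans (lq_addl Hi _ _) hD.
apply: HC; exact: lq_trans (lq_addr Hi _ _) hD.
Qed.

Lemma lq1_exp (L : comNzSemiRingType) (Hi : idemp L) (p : L) m :
  lq 1 p -> lq 1 (p ^+ m).
Proof.
move=> h; elim: m => [|m IH]; first by rewrite expr0 lq_refl.
by rewrite exprS -[1](mulr1 1); apply: lq_mul2.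
Qed.

Lemma lq_expS (L : comNzSemiRingType) (Hi : idemp L) (p : L) m :
  lq 1 p -> lq p (p ^+ m.+1).
Proof.
move=> h; rewrite exprS -{1}[p]mulr1; apply: lq_mul; exact: lq1_exp.
Qed.

Lemma lq1_neq0 (L : comNzSemiRingType) (p : L) : lq 1 p -> p <> 0.
Proof. by move=> h p0; move: h; rewrite p0 => /lq_x0; apply: one_neq0. Qed.

Lemma archi (L : comNzSemiRingType) (Hsf : is_semifield L) (Hi : idemp L) (p : L) (C : seq L) :
  lq 1 p -> (forall N, p ^+ N \in C) -> p = 1.
Proof.
move=> h1 hC.
pose s0 := [seq p ^+ N | N <- iota 0 (size C).+1].
have : ~~ uniq s0.
  apply/negP => U.
  have sub : {subset s0 <= C} by move=> x /mapP [N _ ->].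
  have := uniq_leq_size U sub.
  by rewrite size_map size_iota ltnn.
move=> /(uniqPn 0) [i [j [ltij ltj]]].
rewrite size_map size_iota in ltj.
rewrite !(nth_map 0%N) ?size_iota ?nth_iota //; last by apply: ltn_trans ltj.
rewrite !add0n => eij.
have pi0 : p ^+ i <> 0 by apply: sf_exp_neq0 => //; exact: lq1_neq0.
have e1 : p ^+ (j - i) = 1.
  apply: (sf_cancel Hsf pi0); rewrite mul1r -exprD subnK //; exact: ltnW.
apply: lq_anti; last exact: h1.
have hji : (0 < j - i)%N by rewrite subn_gt0.
by have := lq_expS Hi (j - i).-1 h1; rewrite prednK // e1.
exact: ltn_trans ltj. Qed.

Lemma disj_pow (L : comNzSemiRingType) (Hi : idemp L) (p q : L) :
  lq 1 p -> lq 1 q -> p * q = p + q -> forall N M, p ^+ N * q ^+ M = p ^+ N + q ^+ M.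
Proof.
move=> hp hq hpq.
have c1 : forall N, p ^+ N * q = p ^+ N + q.
  elim => [|N IH]; first by rewrite expr0 mul1r; apply/esym/lqP.
  rewrite exprS -mulrA IH mulrDr hpq addrA -exprS.
  by have /lqP e := lq_expS Hi N hp; rewrite [p ^+ _ + p]addrC e.
move=> N; elim => [|M IH].
  by rewrite expr0 mulr1 addrC; apply/esym/lqP; apply: lq1_exp.
rewrite exprSr mulrA IH mulrDl c1 -exprSr -addrA.
by have /lqP e := lq_expS Hi M hq; rewrite e.
Qed.

Lemma total (L : comNzSemiRingType) (f : {rmorphism zmax -> L}) (Hsf : is_semifield L)
  (Hinj : injective f) (s : seq L) (Hs : FG f s) (c : nat)
  (Hc : forall i : 'I_(size s),
    s`_i = 0 \/ (lq (E f (- c%:Z)) s`_i /\ lq s`_i (E f c%:Z)))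
  (x : L) : x <> 0 -> lq 1 x \/ lq x 1.
Proof.
move=> x0; have Hi := idemp_f f.
case h1x : (lq 1 x); first by left.
right.
have [w Hw] := Hsf x x0.
set p := x + 1; set q := w + 1.
have hp : lq 1 p by apply: lq_addr.
have hq : lq 1 q by apply: lq_addr.
have hpq : p * q = p + q by rewrite /p /q mulrDl !mulrDr Hw; ring.
have hxq : x * q = p by rewrite /p /q mulrDr Hw mulr1 addrC.
have DP := disj_pow Hi hp hq hpq.
have q0 : forall N, q ^+ N <> 0 by move=> N; apply: sf_exp_neq0 => //; exact: lq1_neq0.
have hpN : forall N, p ^+ N = x ^+ N + 1.
  move=> N; apply: (sf_cancel Hsf (q0 N)).
  by rewrite DP mulrDl -exprMn hxq mul1r.
have hb : forall N, lq (p ^+ N) (E f (c%:Z + c%:Z)).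
  case => [|N]; first by rewrite expr0 -(E0 f); apply: (lq1E Hinj); lia.
  have xN0 : x ^+ N.+1 <> 0 by apply: sf_exp_neq0.
  have [k /andP [k1 k2]] := width Hsf Hinj Hs Hc xN0.
  case: (lerP 0 (k - c%:Z)) => hk.
    exfalso; move/negbT: h1x => /negP; apply.
    have h1 : lq 1 (x ^+ N.+1).
      apply: lq_trans k1; rewrite -(E0 f); exact: (lq1E Hinj).
    have e1 : p ^+ N.+1 = x ^+ N.+1 by rewrite hpN addrC; apply/lqP.
    have e2 : q ^+ N.+1 = 1.
      apply: (sf_cancel Hsf xN0); by rewrite mul1r mulrC -exprMn hxq e1.
    have hq1 : lq q 1 by rewrite -e2; apply: lq_expS.
    have hw1 : lq w 1 by apply: lq_trans hq1; apply: lq_addl.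
    have := lq_mul x hw1; rewrite Hw mulr1 //.
  rewrite hpN; apply: lq_join.
    by apply: lq_trans k2 _; apply: (lq1E Hinj); lia.
  by rewrite -(E0 f); apply: (lq1E Hinj); lia.
have [C HC] := finite_interval Hinj Hs Hc (c + c).
have pC : forall N, p ^+ N \in C.
  move=> N; apply: HC; first exact: lq1_exp.
  by rewrite PoszD; apply: hb.
have := archi Hsf Hi hp pC; rewrite /p => e.
by apply/lqP.
Qed.

Lemma total2 (L : comNzSemiRingType) (Hsf : is_semifield L)
  (Htot : forall x : L, x <> 0 -> lq 1 x \/ lq x 1) (x y : L) : lq x y \/ lq y x.
Proof.
case: (eqVneq x 0) => [->|x0]; first by left; apply: lq0.
case: (eqVneq y 0) => [->|y0]; first by right; apply: lq0.
have y0' : y <> 0 by apply/eqP.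
have [w Hw] := Hsf y y0'.
have xw0 : x * w <> 0 by apply: (sf_mul_neq0 Hsf); [apply/eqP | apply: inv_neq0 Hw].
case: (Htot _ xw0) => h; [right|left].
  by have := lq_mul y h; rewrite mulr1 mulrCA Hw mulr1.
by have := lq_mul y h; rewrite mulr1 mulrCA Hw mulr1.
Qed.

Lemma min_exists (L : comNzSemiRingType)
  (Htot : forall x y : L, lq x y \/ lq y x) (P : pred L) (C : seq L) :
  (exists2 z, z \in C & P z) -> exists b, P b /\ forall z, z \in C -> P z -> lq b z.
Proof.
elim: C => [[z]|a C IH]; first by rewrite in_nil.
move=> [z]; rewrite in_cons => /orP [/eqP ->|zC] Pz.
  case: (boolP (has P C)) => [/hasP [z' z'C Pz']|nP].
    have [b [Pb Hb]] := IH (ex_intro2 _ _ z' z'C Pz').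
    case: (Htot a b) => hab.
      exists a; split => // y; rewrite in_cons => /orP [/eqP ->|yC] Py.
        by apply/lqP; case: (Htot a a) => /lqP.
      exact: lq_trans hab (Hb y yC Py).
    exists b; split => // y; rewrite in_cons => /orP [/eqP ->|yC] Py //.
    exact: Hb.
  exists a; split => // y; rewrite in_cons => /orP [/eqP ->|yC] Py.
    by apply/lqP; case: (Htot a a) => /lqP.
  by move/hasPn: nP => /(_ y yC); rewrite Py.
have [b [Pb Hb]] := IH (ex_intro2 _ _ z zC Pz).
case: (Htot a b) => hab.
  case Pa : (P a).
    exists a; split => // y; rewrite in_cons => /orP [/eqP ->|yC] Py.
      by apply/lqP; case: (Htot a a) => /lqP.
    exact: lq_trans hab (Hb y yC Py).
  exists b; split => // y; rewrite in_cons => /orP [/eqP ->|yC] Py; last exact: Hb.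
  by rewrite Pa in Py.
exists b; split => // y; rewrite in_cons => /orP [/eqP ->|yC] Py //; exact: Hb.
Qed.

Lemma find_step (P : nat -> bool) N : P 0%N -> ~~ P N -> exists j, P j /\ ~~ P j.+1.
Proof.
move=> P0; elim: N => [|N IH]; first by rewrite P0.
case PN : (P N) => H; first by exists N; rewrite PN.
by apply: IH; rewrite PN.
Qed.

From Stdlib Require Import Classical.

Lemma structure (L : comNzSemiRingType) (f : {rmorphism zmax -> L}) (Hsf : is_semifield L)
  (Hinj : injective f) (s : seq L) (Hs : FG f s) :
  exists (b : L) (n : nat), [/\ (0 < n)%N, lq 1 b, b <> 1, b ^+ n = E f 1 &
     forall y, y <> 0 -> exists k j, y = E f k * b ^+ j].
Proof.
have Hi := idemp_f f.
have [c Hc] := gen_sand Hsf Hinj Hs.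
have Htot := total2 Hsf (total Hsf Hinj Hs Hc).
have [C HC] := finite_interval Hinj Hs Hc 1.
have E1n1 : E f 1 <> 1 by rewrite -(E0 f) /E => /Hinj [].
pose P := fun z : L => [&& lq 1 z, z != 1 & lq z (E f 1)].
have [b [Pb Hb]] : exists b, P b /\ forall z, z \in C -> P z -> lq b z.
  apply: min_exists => //; exists (E f 1).
    by apply: HC; [rewrite -(E0 f); apply: (lq1E Hinj) | apply: lq_refl].
  by rewrite /P -(E0 f) (lqE Hinj) lq_refl // andbT; apply/eqP; rewrite E0.
move: Pb => /and3P [b1 bn1 bE].
have b0 : b <> 0 by apply: lq1_neq0.
have [bi Hbi] := Hsf b b0.
have bi1 : lq bi 1 by have := lq_mul bi b1; rewrite mulr1 mulrC Hbi.
have [N HN] : exists N, ~~ lq (b ^+ N) (E f 1).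
  apply: NNPP => H; move/eqP: bn1; apply.
      apply: (archi Hsf Hi (C := C) b1) => N; apply: HC; first exact: lq1_exp.
  by apply/negPn/negP => H'; apply: H; exists N.
have desc : forall z, lq 1 z -> lq z (E f 1) -> exists j, z = b ^+ j.
  move=> z z1 zE.
  have [j [Pj nPj]] : exists j, lq (b ^+ j) z /\ ~~ lq (b ^+ j.+1) z.
    apply: (find_step (P := fun j => lq (b ^+ j) z) (N := N)); first by rewrite expr0.
    apply/negP => H; move/negP: HN; apply; exact: lq_trans H zE.
  have zb : lq z (b ^+ j.+1) by case: (Htot (b ^+ j.+1) z) => // h; rewrite h in nPj.
  set z' := z * bi ^+ j.
  have ebb : b ^+ j * bi ^+ j = 1 by rewrite -exprMn Hbi expr1n.
  have z'1 : lq 1 z' by rewrite -ebb /z' [z * _]mulrC [b ^+ j * _]mulrC; apply: lq_mul.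
  have z'b : lq z' b.
    have e : bi ^+ j * b ^+ j.+1 = b by rewrite exprSr mulrA [bi ^+ j * _]mulrC ebb mul1r.
    by have := lq_mul (bi ^+ j) zb; rewrite e mulrC.
  have bij1 : lq (bi ^+ j) 1 by rewrite -(expr1n _ j); elim: j {Pj nPj zb z' z'1 z'b ebb} => [|j IH]; rewrite ?expr0 ?lq_refl // !exprS; apply: lq_mul2.
  have z'z : lq z' z by have := lq_mul z bij1; rewrite mulr1.
  case: (eqVneq z' 1) => [e|ne].
    exists j; have -> : z = z' * b ^+ j by rewrite /z' -mulrA [bi ^+ j * _]mulrC ebb mulr1.
    by rewrite e mul1r.
  have : lq b z'.
    apply: Hb; first by apply: HC => //; exact: lq_trans z'z zE.
    by rewrite /P z'1 ne (lq_trans z'b bE).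
  move=> bz'; have e : z' = b by apply: lq_anti.
  exfalso; move/negP: nPj; apply.
  have -> : z = z' * b ^+ j by rewrite /z' -mulrA [bi ^+ j * _]mulrC ebb mulr1.
  by rewrite e exprS lq_refl.
have [n en] := desc (E f 1) ltac:(by rewrite -(E0 f) (lqE Hinj)) (lq_refl Hi _).
exists b, n; split => //.
- by case: n en => // /esym; rewrite expr0.
- by apply/eqP.
move=> y y0.
have [j0 Hj0] := lb Hsf Hinj Hs y0; have [k0 Hk0] := ub Hsf Hinj Hs y.
have [m [Pm nPm]] : exists m, lq (E f (j0 + m%:Z)) y /\ ~~ lq (E f (j0 + m.+1%:Z)) y.
  apply: (find_step (P := fun m => lq (E f (j0 + m%:Z)) y) (N := (`|k0 - j0|%N.+1))).
    by rewrite addr0.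
  apply/negP => H; have := lq_trans H Hk0; rewrite (lqE Hinj); lia.
have ym : lq y (E f (j0 + m.+1%:Z)) by case: (Htot (E f (j0 + m.+1%:Z)) y) => // h; rewrite h in nPm.
set z := y * E f (- (j0 + m%:Z)).
have [j ej] : exists j, z = b ^+ j.
  apply: desc.
    by have := lq_mul (E f (- (j0 + m%:Z))) Pm; rewrite EM addNr E0 mulrC.
  have := lq_mul (E f (- (j0 + m%:Z))) ym; rewrite EM mulrC.
  by have -> : - (j0 + m%:Z) + (j0 + m.+1%:Z) = 1 by lia.
exists (j0 + m%:Z), j; rewrite -ej /z mulrCA EM addrN E0 mulr1 //.
Qed.

Definition beta (L : comNzSemiRingType) (f : {rmorphism zmax -> L}) (b : L) (n : nat) (k : int) :=
  E f (k %/ n%:Z)%Z * b ^+ (absz (k %% n%:Z)%Z).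

Lemma E1X (L : comNzSemiRingType) (f : {rmorphism zmax -> L}) t : E f 1 ^+ t = E f t%:Z.
Proof.
elim: t => [|t IH]; first by rewrite expr0 E0.
by rewrite exprS IH EM; congr (E f _); lia.
Qed.

Lemma beta_rep (L : comNzSemiRingType) (f : {rmorphism zmax -> L}) (b : L) (n : nat)
  (n0 : (0 < n)%N) (bn : b ^+ n = E f 1) (q : int) (r : nat) :
  E f q * b ^+ r = beta f b n (q * n%:Z + r%:Z).
Proof.
rewrite {1}(divn_eq r n) exprD mulnC exprM bn E1X mulrA EM.
have e : q * n%:Z + r%:Z = (q + (r %/ n)%N%:Z) * n%:Z + (r %% n)%N%:Z.
  by rewrite {1}(divn_eq r n) PoszD PoszM mulrDl addrA.
have n0' : n%:Z != 0 by rewrite eqz_nat -lt0n.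
rewrite /beta e divzMDl // divz_small ?addr0; last first.
  by apply/andP; split => //; rewrite ltz_nat ltn_mod.
rewrite modzMDl modz_small //.
by apply/andP; split => //; rewrite ltz_nat ltn_mod.
Qed.

Lemma beta_dec (n : nat) (n0 : (0 < n)%N) (k : int) :
  k = (k %/ n%:Z)%Z * n%:Z + (absz (k %% n%:Z)%Z)%:Z.
Proof.
have n0' : n%:Z != 0 by rewrite eqz_nat -lt0n.
by rewrite gez0_abs ?modz_ge0 // -divz_eq.
Qed.

Lemma beta_mul (L : comNzSemiRingType) (f : {rmorphism zmax -> L}) (b : L) (n : nat)
  (n0 : (0 < n)%N) (bn : b ^+ n = E f 1) j k :
  beta f b n j * beta f b n k = beta f b n (j + k).
Proof.
rewrite {1}/beta {1}/beta mulrACA EM -exprD (beta_rep n0 bn).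
congr (beta f b n _); rewrite {3}(beta_dec n0 j) {3}(beta_dec n0 k) PoszD; ring.
Qed.

Lemma beta0 (L : comNzSemiRingType) (f : {rmorphism zmax -> L}) (b : L) (n : nat)
  (n0 : (0 < n)%N) (bn : b ^+ n = E f 1) : beta f b n 0 = 1.
Proof. by have := beta_rep n0 bn 0 0; rewrite mul0r addr0 expr0 E0 mulr1. Qed.

Lemma beta1 (L : comNzSemiRingType) (f : {rmorphism zmax -> L}) (b : L) (n : nat)
  (n0 : (0 < n)%N) (bn : b ^+ n = E f 1) : beta f b n 1 = b.
Proof. by have := beta_rep n0 bn 0 1; rewrite mul0r add0r expr1 E0 mul1r. Qed.

Lemma beta_frob (L : comNzSemiRingType) (f : {rmorphism zmax -> L}) (b : L) (n : nat)
  (n0 : (0 < n)%N) (bn : b ^+ n = E f 1) k : beta f b n (n%:Z * k) = E f k.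
Proof. by have := beta_rep n0 bn k 0; rewrite addr0 expr0 mulr1 mulrC. Qed.

Lemma beta_ge1 (L : comNzSemiRingType) (f : {rmorphism zmax -> L}) (Hinj : injective f)
  (b : L) (n : nat) (n0 : (0 < n)%N) (bn : b ^+ n = E f 1) (b1 : lq 1 b) m :
  0 <= m -> lq 1 (beta f b n m).
Proof.
move=> m0; have Hi := idemp_f f.
rewrite /beta -[1](mulr1 1); apply: lq_mul2; last exact: lq1_exp.
by rewrite -(E0 f) (lqE Hinj) divz_ge0 // ltz_nat.
Qed.

Lemma beta_mono (L : comNzSemiRingType) (f : {rmorphism zmax -> L}) (Hinj : injective f)
  (b : L) (n : nat) (n0 : (0 < n)%N) (bn : b ^+ n = E f 1) (b1 : lq 1 b) j k :
  j <= k -> lq (beta f b n j) (beta f b n k).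
Proof.
move=> jk; have -> : k = j + (k - j) by rewrite addrC subrK.
rewrite -beta_mul // -{1}[beta f b n j]mulr1; apply: lq_mul.
by apply: beta_ge1 => //; rewrite subr_ge0.
Qed.

Lemma beta_inv (L : comNzSemiRingType) (f : {rmorphism zmax -> L}) (b : L) (n : nat)
  (n0 : (0 < n)%N) (bn : b ^+ n = E f 1) k : beta f b n k * beta f b n (- k) = 1.
Proof. by rewrite beta_mul // subrr beta0. Qed.

Lemma beta_neq0 (L : comNzSemiRingType) (f : {rmorphism zmax -> L}) (b : L) (n : nat)
  (n0 : (0 < n)%N) (bn : b ^+ n = E f 1) k : beta f b n k <> 0.
Proof. by apply: (@inv_neq0 L (beta f b n (- k))); rewrite beta_mul // addNr beta0. Qed.

Lemma beta_inj (L : comNzSemiRingType) (f : {rmorphism zmax -> L}) (Hsf : is_semifield L)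
  (Hinj : injective f)
  (b : L) (n : nat) (n0 : (0 < n)%N) (bn : b ^+ n = E f 1) (b1 : lq 1 b) (bn1 : b <> 1) :
  injective (beta f b n).
Proof.
suff H : forall j k, j < k -> beta f b n j <> beta f b n k.
  move=> j k e; case: (ltrgtP j k) => // h; [by case: (H _ _ h e) | by case: (H _ _ h (esym e))].
move=> j k jk e.
have e1 : beta f b n (k - j) = 1.
  apply: (sf_cancel Hsf (beta_neq0 n0 bn (k := j))); rewrite mul1r mulrC beta_mul //. have -> : j + (k - j) = k by rewrite addrC subrK.
  by [].
apply: bn1; apply: lq_anti; last exact: b1.
rewrite -e1 -{1}(beta1 n0 bn); apply: (beta_mono Hinj n0 bn b1); lia.
Qed.

Definition phiz (L : comNzSemiRingType) (f : {rmorphism zmax -> L}) (b : L) (n : nat)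
  (x : zmax) : L := if x is zmax_fin k then beta f b n k else 0.

Lemma zaddE j k : zmax_fin j + zmax_fin k = zmax_fin (Num.max j k). Proof. by []. Qed.
Lemma zmulE j k : zmax_fin j * zmax_fin k = zmax_fin (j + k). Proof. by []. Qed.

Lemma build (L : comNzSemiRingType) (f : {rmorphism zmax -> L}) (Hsf : is_semifield L)
  (Hinj : injective f) (b : L) (n : nat) (n0 : (0 < n)%N) (b1 : lq 1 b) (bn1 : b <> 1)
  (bn : b ^+ n = E f 1) (Hrep : forall y, y <> 0 -> exists k j, y = E f k * b ^+ j) :
  exists phi : {rmorphism zmax -> L},
      bijective phi /\ (forall x : zmax, phi (frob_zmax n x) = f x).
Proof.
have Hi := idemp_f f.
pose phi := phiz f b n.
have h1 : nmod_morphism phi.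
  split => // [[|j] [|k]] //=; rewrite ?add0r ?addr0 //.
  case: (lerP j k) => h.
    by apply/esym/lqP; apply: (beta_mono Hinj n0 bn b1).
  by rewrite addrC; apply/esym/lqP; apply: (beta_mono Hinj n0 bn b1); apply: ltW.
have h2 : monoid_morphism phi.
  split; first by rewrite /phi /= beta0.
  move=> [|j] [|k] //=; rewrite ?mul0r ?mulr0 //.
  by rewrite ?zmulE /= beta_mul.
pose Phi : {rmorphism zmax -> L} :=
  HB.pack phi (GRing.isNmodMorphism.Build zmax L phi h1) (GRing.isMonoidMorphism.Build zmax L phi h2).
exists Phi; split; last first.
  case => [|k] /=; first by rewrite f_ninf.
  exact: (beta_frob n0 bn).
have surj : forall y, exists x, phi x = y.
  move=> y; case: (eqVneq y 0) => [->|y0]; first by exists zmax_ninf.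
  have y0' : y <> 0 by apply/eqP.
  have [k [j ->]] := Hrep y y0'.
  by exists (zmax_fin (k * n%:Z + j%:Z)); rewrite /= (beta_rep n0 bn).
pose g y := proj1_sig (constructive_indefinite_description _ (surj y)).
have gK : cancel g phi by move=> y; exact: (proj2_sig (constructive_indefinite_description _ (surj y))).
have phinj : injective phi.
  move=> [|j] [|k] //=.
  - by move=> /esym /(beta_neq0 n0 bn).
  - by move=> /(beta_neq0 n0 bn).
  by move=> /(beta_inj Hsf Hinj n0 bn b1 bn1) ->.
exists g => // x; apply: phinj; exact: gK.
Qed.
Theorem mainTheorem1 (L : comNzSemiRingType) (f : {rmorphism zmax -> L}) :
  is_semifield L ->
  injective f ->
  fin_gen_semimodule f ->
  exists n : nat, (0 < n)%N /\
    exists phi : {rmorphism zmax -> L},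
      bijective phi /\ (forall x : zmax, phi (frob_zmax n x) = f x).
Proof.
move=> Hsf Hinj [s Hs].
have [b [n [n0 b1 bn1 bn Hrep]]] := structure Hsf Hinj Hs.
exists n; split; first exact: n0.
have H := @build L f Hsf Hinj b n n0 b1 bn1 bn Hrep.
exact H.
Qed.
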